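(* Let $x\in\mathbb R^d$ and $q\in\mathcal C$ be such that the segment $\overline{xq}$ does not intersect the medial axis $\mathcal M$, and let $p=\mathrm{cl}(x)$. Then $p$ and $q$ lie in the same connected component of $\mathcal C$, and for a fixed orientation of that component, the interior of $B_x(d(x,q))$ contains either $[p,q)$ or $(q,p]$.
   Context: $\mathcal C\subset\mathbb R^d$ ($d\ge2$) is a finite union of pairwise disjoint closed curves (images of injective continuous maps $S^1\to\mathbb R^d$). $d(x,y)$ is Euclidean distance, $B_x(r)$ the closed ball of radius $r$ about $x$, $\overline{xy}$ the closed segment. The medial axis $\mathcal M$ is the set of points with no unique closest point in $\mathcal C$; $\mathrm{cl}(x)$ is the unique closest point of $\mathcal C$ to $x\notin\mathcal M$. For $p,q$ in the same component with a fixed orientation, $[p,q]$ is $\{p\}$ if $p=q$ and otherwise the arc of $\mathcal C$ from $p$ to $q$ traversed following the orientation; $[p,q)$, $(q,p]$ etc. denote the corresponding arcs with the indicated endpoints removed. *)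

(* Defs.v *)
From HB Require Import structures.
From mathcomp Require Import all_boot all_order all_algebra.
From mathcomp Require Import classical_sets reals topology normedtype.
Set Implicit Arguments. Unset Strict Implicit. Unset Printing Implicit Defensive.
Import Order.TTheory GRing.Theory Num.Theory.
Import numFieldNormedType.Exports.
Local Open Scope ring_scope.
Local Open Scope classical_set_scope.

Section Defs.
Variables (R : realType) (d : nat).
Notation pt := 'rV[R]_d.

Definition euclid_dist (x y : pt) : R :=
  Num.sqrt (\sum_(i < d) (x ord0 i - y ord0 i) ^+ 2).

Definition ball_int (x : pt) (r : R) : set pt := [set y | euclid_dist x y < r].

Definition cseg (x y : pt) : set pt :=
  [set z | exists t : R, 0 <= t <= 1 /\ z = (1 - t) *: x + t *: y].

(* A closed curve (injective continuous image of S^1), given by a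
   1-periodic continuous parametrization injective on [0,1).
   The orientation of the curve is that of increasing parameter. *)
Definition closed_curve (g : R -> pt) : Prop :=
  continuous g /\ (forall t, g (t + 1) = g t) /\
  (forall s t, 0 <= s < 1 -> 0 <= t < 1 -> g s = g t -> s = t).

Definition curve_img (g : R -> pt) : set pt := [set y | exists t, y = g t].

Definition curves_union (n : nat) (g : 'I_n -> R -> pt) : set pt :=
  [set y | exists i, curve_img (g i) y].

Definition closest (C : set pt) (x p : pt) : Prop :=
  C p /\ forall y, C y -> euclid_dist x p <= euclid_dist x y.

Definition medial_axis (C : set pt) : set pt :=
  [set x | ~ (exists! p, closest C x p)].

(* end parameter of the oriented arc from parameter s to parameter t
   (both in [0,1)) *)
Definition arc_end (s t : R) : R := if s <= t then t else t + 1.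

(* [p, q) : arc from p to q following the orientation of g, q removed
   (empty when p = q). *)
Definition arc_co (g : R -> pt) (p q : pt) : set pt :=
  [set y | exists s t u, [/\ 0 <= s < 1, 0 <= t < 1, g s = p /\ g t = q,
     s <= u < arc_end s t & y = g u]].

(* (q, p] : arc from q to p following the orientation of g, q removed
   (empty when p = q). *)
Definition arc_oc (g : R -> pt) (q p : pt) : set pt :=
  [set y | exists t s u, [/\ 0 <= t < 1, 0 <= s < 1, g t = q /\ g s = p,
     t < u <= arc_end t s & y = g u]].

End Defs.

(* Main.v *)
Require Import Defs.
From HB Require Import structures.
From mathcomp Require Import all_boot all_order all_algebra.
From mathcomp Require Import boolp classical_sets reals topology normedtype realfun derive.
From mathcomp Require Import ring lra zify.
Import Order.TTheory GRing.Theory Num.Theory.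
Import numFieldNormedType.Exports.
Local Open Scope ring_scope.
Local Open Scope classical_set_scope.

Section S.
Variables (R : realType) (d : nat).
Notation pt := 'rV[R]_d.
Lemma sum_cont (I : Type) (s : seq I) (f : I -> R -> R) :
  (forall i, continuous (f i)) -> continuous (fun u => \sum_(i <- s) f i u).
Proof.
move=> fc; elim: s => [|a s IH].
  have -> : (fun u => \sum_(i <- [::]) f i u) = (fun=> 0).
    by apply: funext => v; rewrite big_nil.
  by move=> u; exact: cvg_cst.
have -> : (fun u => \sum_(i <- a :: s) f i u) = (fun u => f a u + \sum_(i <- s) f i u).
  by apply: funext => v; rewrite big_cons.
by move=> u; apply: continuousD; [exact: fc| exact: IH].
Qed.

Lemma dist_cont (z : pt) (h : R -> pt) : continuous h ->
  continuous (fun u => euclid_dist z (h u)).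
Proof.
move=> hc u; rewrite /euclid_dist.
apply: continuous_comp; last exact: sqrt_continuous.
apply: (@sum_cont _ (index_enum 'I_d) (fun i u => (z ord0 i - h u ord0 i) ^+ 2)) => i v.
apply: (continuous_comp (f := fun v => z ord0 i - h v ord0 i) (g := fun r => r ^+ 2)); last exact: exprn_continuous.
have H2 : {for v, continuous (fun v => h v ord0 i)}.
  exact: (continuous_comp (hc v) (@coord_continuous _ _ _ ord0 i (h v))).
exact: (continuousB (f := fun=> z ord0 i) (g := fun v => h v ord0 i) (cvg_cst _) H2).
Qed.
Lemma CS (a b : 'I_d -> R) :
  (\sum_i a i * b i) ^+ 2 <= (\sum_i a i ^+ 2) * (\sum_i b i ^+ 2).
Proof.
set A := \sum_i a i ^+ 2; set B := \sum_i b i ^+ 2; set S := \sum_i a i * b i.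
have B0 : 0 <= B by apply: sumr_ge0 => i _; exact: sqr_ge0.
have [Bz|Bp] := eqVneq B 0.
  have bz : forall i, b i = 0.
    move=> i; apply/eqP; rewrite -sqrf_eq0; apply/eqP.
    move/eqP: Bz; rewrite psumr_eq0 => [/allP H|j _]; last exact: sqr_ge0.
    by apply/eqP; apply: H; rewrite mem_index_enum.
  have -> : S = 0 by rewrite /S big1 // => i _; rewrite bz mulr0.
  by rewrite Bz expr0n /= mulr0.
have Bpos : 0 < B by rewrite lt_def Bp B0.
have H : 0 <= \sum_i (B * a i - S * b i) ^+ 2 by apply: sumr_ge0 => i _; exact: sqr_ge0.
have E : \sum_i (B * a i - S * b i) ^+ 2 = B * (A * B - S ^+ 2).
  rewrite (eq_bigr (fun i => B ^+ 2 * a i ^+ 2 - (2 * B * S) * (a i * b i) + S ^+ 2 * b i ^+ 2)); last first.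
    by move=> i _; rewrite sqrrB !exprMn; ring.
  rewrite big_split /= sumrB -!mulr_sumr -/A -/B -/S; ring.
rewrite E in H; rewrite -subr_ge0.
by rewrite -(pmulr_rge0 _ Bpos).
Qed.

Lemma dist_ge0 (x y : pt) : 0 <= euclid_dist x y.
Proof. exact: sqrtr_ge0. Qed.

Lemma dist_sym (x y : pt) : euclid_dist x y = euclid_dist y x.
Proof. by rewrite /euclid_dist; congr Num.sqrt; apply: eq_bigr => i _; rewrite -sqrrN opprB. Qed.

Lemma dist_xx (x : pt) : euclid_dist x x = 0.
Proof. by rewrite /euclid_dist big1 ?sqrtr0 // => i _; rewrite subrr expr0n. Qed.

Lemma dist_eq0 (x y : pt) : euclid_dist x y = 0 -> x = y.
Proof.
rewrite /euclid_dist => /eqP; rewrite sqrtr_eq0 => H.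
have H' : \sum_(i < d) (x ord0 i - y ord0 i) ^+ 2 = 0.
  by apply/eqP; rewrite eq_le H /=; apply: sumr_ge0 => i _; exact: sqr_ge0.
apply/rowP => i; apply/eqP; rewrite -subr_eq0 -sqrf_eq0.
move/eqP: H'; rewrite psumr_eq0 => [/allP K|j _]; last exact: sqr_ge0.
by apply: K; rewrite mem_index_enum.
Qed.

Lemma dist_tri (x y z : pt) : euclid_dist x z <= euclid_dist x y + euclid_dist y z.
Proof.
rewrite /euclid_dist.
set a := fun i => x ord0 i - y ord0 i; set b := fun i => y ord0 i - z ord0 i.
have -> : \sum_(i < d) (x ord0 i - z ord0 i) ^+ 2 = \sum_i (a i + b i) ^+ 2.
  by apply: eq_bigr => i _; rewrite /a /b addrA subrK.
rewrite -/(\sum_i a i ^+ 2) -/(\sum_i b i ^+ 2).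
set A := \sum_i a i ^+ 2; set B := \sum_i b i ^+ 2; set S := \sum_i a i * b i.
have A0 : 0 <= A by apply: sumr_ge0 => i _; exact: sqr_ge0.
have B0 : 0 <= B by apply: sumr_ge0 => i _; exact: sqr_ge0.
have -> : \sum_i (a i + b i) ^+ 2 = A + 2 * S + B.
  rewrite (eq_bigr (fun i => a i ^+ 2 + 2 * (a i * b i) + b i ^+ 2)); last by move=> i _; rewrite sqrrD; ring.
  by rewrite !big_split /= -mulr_sumr.
have SB : S <= Num.sqrt A * Num.sqrt B.
  have [Sn|Sp] := lerP S 0; first by apply: le_trans Sn _; apply: mulr_ge0; exact: sqrtr_ge0.
  rewrite -sqrtrM // -(ger0_norm (ltW Sp)) -sqrtr_sqr.
  by rewrite ler_sqrt ?CS // mulr_ge0.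
have P : 0 <= Num.sqrt A + Num.sqrt B by rewrite addr_ge0 // sqrtr_ge0.
rewrite -(ger0_norm P) -sqrtr_sqr ler_sqrt; last exact: sqr_ge0.
rewrite sqrrD !sqr_sqrtr //.
have : 2 * S <= Num.sqrt A * Num.sqrt B *+ 2 by rewrite mulr2n mulrDl mul1r lerD.
lra.
Qed.
Lemma cont_eps {F : R -> R} {u : R} : {for u, continuous F} ->
  forall e, 0 < e -> exists2 del, 0 < del & forall v, `|u - v| < del -> `|F u - F v| < e.
Proof.
move=> /cvgrPdist_lt H e e0.
have /nbhs_ballP [del del0 Hd] := H e e0.
exists del => // v uv; apply: Hd.

Qed.

Lemma first_exit (F : R -> R) (D : R) : continuous F -> F 0 < D ->
  exists a, [/\ 0 < a <= 1, (forall v, 0 <= v < a -> F v < D) & (a < 1 -> D <= F a)].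
Proof.
move=> Fc F0.
pose A := [set u : R | 0 <= u <= 1 /\ forall v, 0 <= v <= u -> F v < D].
have A0 : A 0.
  split; first by rewrite lexx ler01.
  by move=> v /andP[a b]; have -> : v = 0 by apply/eqP; rewrite eq_le a b.
have Aub : forall u, A u -> u <= 1 by move=> u [/andP[]].
have hs : has_sup A by split; [exists 0 | exists 1 => u /Aub].
have inA : forall u, A u -> u <= sup A by move=> u Au; exact: sup_upper_bound.
have below : forall v, 0 <= v < sup A -> F v < D.
  move=> v /andP[v0 vs].
  have e0 : 0 < sup A - v by rewrite subr_gt0.
  have [e [_ Ae] ve] := sup_adherent e0 hs.
  apply: Ae; rewrite v0 /=; move: ve; rewrite opprB addrCA subrr addr0 => /ltW //.
have le1 : sup A <= 1 by apply: ge_sup; [exists 0 | move=> u /Aub].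
have lowc : forall s del, 0 <= s -> 0 < del -> (forall v, 0 <= v < s -> F v < D) ->
    (forall v, `|s - v| < del -> F v < D) -> s < 1 -> sup A <= s -> False.
  move=> s del s0 d0 Hb Hd s1 ss.
  have [h|h] := lerP (s + del / 2) 1.
    have : A (s + del / 2).
      split; first by apply/andP; split => //; lra.
      move=> v /andP[v0 vs]; have [vs'|vs'] := ltP v s; first by apply: Hb; rewrite v0.
      by apply: Hd; rewrite ler0_norm; lra.
    by move/inA; lra.
  have : A 1.
    split; first by rewrite ler01 lexx.
    move=> v /andP[v0 vs]; have [vs'|vs'] := ltP v s; first by apply: Hb; rewrite v0.
    by apply: Hd; rewrite ler0_norm; lra.
  by move/inA; lra.
have pos : 0 < sup A.
  have e0 : 0 < D - F 0 by rewrite subr_gt0.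
  have [del d0 Hd] := cont_eps (Fc 0) _ e0.
  have [h|h] := lerP (sup A) 0; last by [].
  exfalso; apply: (lowc 0 del (lexx 0) d0 _ _ ltr01 h).
    by move=> v; lra.
  move=> v /Hd; rewrite ltr_norml; lra.
exists (sup A); split => //; first by rewrite pos le1.
move=> s1; have [//|h] := lerP D (F (sup A)).
have e0 : 0 < D - F (sup A) by rewrite subr_gt0.
have [del d0 Hd] := cont_eps (Fc (sup A)) _ e0.
exfalso; apply: (lowc (sup A) del (ltW pos) d0 below _ s1 (lexx _)) => v /Hd; rewrite ltr_norml; lra.
Qed.

Lemma conn01 (P : R -> Prop) : P 0 ->
  (forall t, 0 <= t <= 1 -> P t -> exists2 eta, 0 < eta &
     forall t', 0 <= t' <= 1 -> `|t - t'| < eta -> P t') ->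
  (forall t, 0 < t <= 1 -> (forall t', 0 <= t' < t -> P t') -> P t) -> P 1.
Proof.
move=> P0 Po Pc.
pose A := [set u : R | 0 <= u <= 1 /\ forall v, 0 <= v <= u -> P v].
have A0 : A 0.
  split; first by rewrite lexx ler01.
  by move=> v /andP[a b]; have -> : v = 0 by apply/eqP; rewrite eq_le a b.
have Aub : forall u, A u -> u <= 1 by move=> u [/andP[]].
have hs : has_sup A by split; [exists 0 | exists 1 => u /Aub].
have inA : forall u, A u -> u <= sup A by move=> u Au; exact: sup_upper_bound.
have below : forall v, 0 <= v < sup A -> P v.
  move=> v /andP[v0 vs].
  have e0 : 0 < sup A - v by rewrite subr_gt0.
  have [e [_ Ae] ve] := sup_adherent e0 hs.
  apply: Ae; rewrite v0 /=; move: ve; rewrite opprB addrCA subrr addr0 => /ltW //.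
have le1 : sup A <= 1 by apply: ge_sup; [exists 0 | move=> u /Aub].
have ge0 : 0 <= sup A by exact: inA.
have Ps : P (sup A).
  have [h|h] := lerP (sup A) 0.
    by have -> : sup A = 0 by apply/eqP; rewrite eq_le h ge0.
  by apply: Pc => //; rewrite h le1.
have [h1|h1] := lerP 1 (sup A).
  by have <- : sup A = 1 by apply/eqP; rewrite eq_le le1 h1.
have [eta e0 He] := Po (sup A) (introT andP (conj ge0 le1)) Ps.
exfalso.
have key : forall m, sup A < m <= 1 -> m <= sup A + eta / 2 -> A m.
  move=> m /andP[m1 m2] m3; split; first by apply/andP; split => //; lra.
  move=> v /andP[v0 vm]; have [vs|vs] := ltP v (sup A); first by apply: below; rewrite v0.
  by apply: He; [apply/andP; split; lra | rewrite ler0_norm; lra].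
have [h|h] := lerP (sup A + eta / 2) 1.
  have /inA : A (sup A + eta / 2) by apply: key; [apply/andP; split; lra | lra].
  lra.
have /inA : A 1 by apply: key; [apply/andP; split; lra | lra].
lra.
Qed.
End S.
Arguments dist_tri {R d}.
Arguments dist_sym {R d}.
Arguments dist_xx {R d}.
Arguments dist_eq0 {R d}.
Arguments dist_ge0 {R d}.
Arguments dist_cont {R d}.
Arguments first_exit {R}.
Arguments conn01 {R}.
Section S2.
Variables (R : realType) (d : nat).
Notation pt := 'rV[R]_d.

Lemma finite_min (I : finType) (P : I -> R -> Prop) :
  (forall j, exists2 e, 0 < e & P j e) ->
  (forall j e e', 0 < e' -> e' <= e -> P j e -> P j e') ->
  exists2 e, 0 < e & forall j, P j e.
Proof.
move=> H M.
suff : forall s : seq I, exists2 e, 0 < e & forall j, j \in s -> P j e.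
  by move=> /(_ (enum I)) [e e0 He]; exists e => // j; apply: He; rewrite mem_enum.
elim=> [|a s [e e0 He]]; first by exists 1 => //; rewrite ltr01.
have [ea ea0 Ha] := H a.
have [h|h] := lerP ea e.
  exists ea => // j; rewrite inE => /orP[/eqP->//|js].
  by apply: (M _ e) => //; apply: He.
exists e => // j; rewrite inE => /orP[/eqP->|js]; last exact: He.
by apply: (M _ ea) => //; exact: ltW.
Qed.

Lemma pos_min (F : R -> R) (l r : R) : continuous F ->
  (forall u, l <= u <= r -> 0 < F u) ->
  exists2 m, 0 < m & forall u, l <= u <= r -> m <= F u.
Proof.
move=> Fc Fp.
have [lr|rl] := lerP l r; last first.
  by exists 1; [exact: ltr01 | move=> u /andP[a b]; exfalso; lra].
have [c cin cmin] := EVT_min lr (continuous_subspaceT (A := `[l, r]) Fc).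
move: cin; rewrite in_itv /= => cin.
exists (F c); first exact: Fp.
by move=> u uin; apply: cmin; rewrite in_itv.
Qed.

Lemma periodic_int {g : R -> pt} : closed_curve g ->
  forall t (k : int), g (t + k%:~R) = g t.
Proof.
move=> [_ [gp _]] t k.
have pos : forall t (m : nat), g (t + m%:R) = g t.
  move=> s; elim=> [|m IH]; first by rewrite addr0.
  by rewrite -natr1 addrA gp.
case: k => m.
  exact: pos.
rewrite NegzE intrN.
have := pos (t - m.+1%:R) m.+1; rewrite subrK => <-.
by [].
Qed.

Lemma mod_rep {g : R -> pt} : closed_curve g ->
  forall t, exists s, [/\ 0 <= s < 1, g s = g t & exists k : int, t = s + k%:~R].
Proof.
move=> gc t; exists (t - (Num.floor t)%:~R); split.
- have := Num.Theory.floor_le t; have := Num.Theory.floorD1_gt t.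
  rewrite intrD; lra.
- by rewrite -(periodic_int gc _ (Num.floor t)) subrK.
- by exists (Num.floor t); rewrite subrK.
Qed.

Lemma int_small (k : int) : `|(k%:~R : R)| < 1 -> k = 0.
Proof.
rewrite -intr_norm -[1]/(1%:~R) ltr_int => h.
by apply/eqP; rewrite -normr_eq0; lia.
Qed.

Lemma inj_near {g : R -> pt} : closed_curve g ->
  forall a b, g a = g b -> `|a - b| < 1 -> a = b.
Proof.
move=> gc a b gab ab.
have [sa [sa1 ga [ka ea]]] := mod_rep gc a.
have [sb [sb1 gb [kb eb]]] := mod_rep gc b.
have := gc.2.2 sa sb sa1 sb1; rewrite ga gb gab => /(_ erefl) ssb.
have hk : ka - kb = 0.
  apply: int_small; rewrite intrB.
  have -> : (ka%:~R : R) - kb%:~R = a - b by rewrite ea eb ssb; ring.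
  exact: ab.
by rewrite ea eb ssb (_ : ka = kb) //; apply/eqP; rewrite -subr_eq0 hk.
Qed.
End S2.
Arguments finite_min {R}.
Arguments pos_min {R}.
Arguments periodic_int {R d g}.
Arguments mod_rep {R d g}.
Arguments inj_near {R d g}.
Lemma dist_scale {R : realType} {d : nat} (a b v w : 'rV[R]_d) (c : R) :
  (forall i, a ord0 i - b ord0 i = c * (v ord0 i - w ord0 i)) ->
  euclid_dist a b = `|c| * euclid_dist v w.
Proof.
move=> H; rewrite /euclid_dist.
rewrite (eq_bigr (fun i => c ^+ 2 * (v ord0 i - w ord0 i) ^+ 2)); last first.
  by move=> i _; rewrite H exprMn.
by rewrite -mulr_sumr sqrtrM ?sqr_ge0 // sqrtr_sqr.
Qed.

Lemma dist_pos {R : realType} {d : nat} (a b : 'rV[R]_d) : a <> b -> 0 < euclid_dist a b.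
Proof.
move=> ab; rewrite lt_def dist_ge0 andbT; apply/eqP => /dist_eq0; exact: ab.
Qed.

Section Main.
Variables (R : realType) (d n : nat) (g : 'I_n -> R -> 'rV[R]_d) (x q p : 'rV[R]_d).
Hypothesis Hcc : forall i, closed_curve (g i).
Hypothesis Hdis : forall i j, i != j -> forall s t, g i s <> g j t.
Hypothesis HqC : curves_union g q.
Hypothesis Hseg : forall y, cseg x q y -> ~ medial_axis (curves_union g) y.
Hypothesis Hp : closest (curves_union g) x p.

Local Notation C := (curves_union g).
Local Notation dist := (@euclid_dist R d).
Local Notation D := (dist x q).

Definition yt (t : R) : 'rV[R]_d := (1 - t) *: x + t *: q.
Definition phi (t : R) : 'rV[R]_d := xget 0 (closest C (yt t)).

Lemma yt_dist1 t : dist x (yt t) = `|t| * D.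
Proof. by apply: dist_scale => i; rewrite /yt !mxE; ring. Qed.

Lemma yt_dist2 t : dist (yt t) q = `|1 - t| * D.
Proof. by apply: dist_scale => i; rewrite /yt !mxE; ring. Qed.

Lemma yt_dist t t' : dist (yt t) (yt t') = `|t' - t| * D.
Proof. by apply: dist_scale => i; rewrite /yt !mxE; ring. Qed.

Lemma uniq_cl {t} : 0 <= t <= 1 -> exists! c, closest C (yt t) c.
Proof.
move=> t01; apply: contrapT; apply: Hseg; exists t; split => //.
Qed.

Lemma phi_cl {t} : 0 <= t <= 1 -> closest C (yt t) (phi t).
Proof. by move=> /uniq_cl [c [cc _]]; apply: xgetPex; exists c. Qed.

Lemma phi_uniq t c : 0 <= t <= 1 -> closest C (yt t) c -> c = phi t.
Proof.
move=> t01 cc; have [c' [cc' U]] := uniq_cl t01.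
by rewrite -(U c cc) (U _ (phi_cl t01)).
Qed.

Lemma yt0 : yt 0 = x.
Proof. by rewrite /yt subr0 scale1r scale0r addr0. Qed.

Lemma yt1 : yt 1 = q.
Proof. by rewrite /yt subrr scale0r scale1r add0r. Qed.

Lemma phi0 : phi 0 = p.
Proof. by apply/esym/phi_uniq; [rewrite lexx ler01 | rewrite yt0]. Qed.

Lemma phi1 : phi 1 = q.
Proof.
apply/esym/phi_uniq; first by rewrite lexx ler01.
rewrite yt1; split => // y _; rewrite dist_xx; exact: dist_ge0.
Qed.

Lemma phi_C t : 0 <= t <= 1 -> C (phi t).
Proof. by move=> /phi_cl []. Qed.

Lemma phi_ball t : 0 <= t <= 1 -> phi t <> q -> dist x (phi t) < D.
Proof.
move=> t01 ne.
have [_ cl] := phi_cl t01.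
have le := cl q HqC.
have lt : dist (yt t) (phi t) < dist (yt t) q.
  rewrite lt_def le andbT; apply/eqP => E; apply: ne; apply/esym/phi_uniq => //.
  by split => // y Cy; rewrite E; exact: cl.
have h := dist_tri x (yt t) (phi t).
rewrite yt_dist1 in h; rewrite yt_dist2 in lt.
have D0 := dist_ge0 x q.
move/andP: t01 => [t0 t1].
rewrite (ger0_norm t0) in h; rewrite ger0_norm in lt; last lra.
apply: le_lt_trans h _; lra.
Qed.

Lemma C_rep c : C c -> exists j u, [/\ 0 <= u < 1 & c = g j u].
Proof.
move=> [j [t ->]]; have [s [s01 gs _]] := mod_rep (Hcc j) t.
by exists j, s; split.
Qed.

Lemma g_cont j : continuous (g j).
Proof. by have [] := Hcc j. Qed.

Lemma phi_cont t : 0 <= t <= 1 -> forall e, 0 < e -> exists2 eta, 0 < eta &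
  forall t', 0 <= t' <= 1 -> `|t - t'| < eta -> dist (phi t) (phi t') < e.
Proof.
move=> t01 e e0.
set c := phi t; set del := dist (yt t) c.
have [clC cl] := phi_cl t01.
have [m m0 Hm] : exists2 m, 0 < m & forall j u, 0 <= u <= 1 ->
    e <= dist c (g j u) -> del + m <= dist (yt t) (g j u).
  apply: (finite_min _ (fun j m => forall u, 0 <= u <= 1 ->
    e <= dist c (g j u) -> del + m <= dist (yt t) (g j u))); last first.
    by move=> j a a' a0 aa H u u01 eu; apply: le_trans (H u u01 eu); rewrite lerD2l.
  move=> j.
  pose F := fun u => (dist (yt t) (g j u) - del) + Num.max 0 (e - dist c (g j u)).
  have Fc : continuous F.
    move=> u.
    have H1 : {for u, continuous (fun u => dist (yt t) (g j u) - del)}.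
      exact: (continuousB (f := fun u => dist (yt t) (g j u)) (g := fun=> del)
        (dist_cont (yt t) (g j) (g_cont j) u) (cvg_cst _)).
    have H2' : {for u, continuous (fun u => e - dist c (g j u))}.
      exact: (continuousB (f := fun=> e) (g := fun u => dist c (g j u))
        (cvg_cst _) (dist_cont c (g j) (g_cont j) u)).
    have H2 : {for u, continuous (fun u => Num.max 0 (e - dist c (g j u)))}.
      exact: (continuous_max (f := fun=> 0) (g := fun u => e - dist c (g j u))
        (cvg_cst _) H2').
    exact: (continuousD (f := fun u => dist (yt t) (g j u) - del)
        (g := fun u => Num.max 0 (e - dist c (g j u))) H1 H2).
  have gC : forall u, C (g j u) by move=> u; exists j, u.
  have Fp : forall u, 0 <= u <= 1 -> 0 < F u.
    move=> u u01; rewrite /F.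
    have h1 : del <= dist (yt t) (g j u) by apply: cl.
    have [lt|ge] := ltP (dist c (g j u)) e.
      have : 0 < Num.max 0 (e - dist c (g j u)) by rewrite lt_max subr_gt0 lt orbT.
      lra.
    have ne : g j u <> c by move=> E; move: ge; rewrite E dist_xx; lra.
    have h2 : del < dist (yt t) (g j u).
      rewrite lt_def h1 andbT; apply/eqP => E; apply: ne; apply: phi_uniq t01 _.
      by split => // y Cy; rewrite E; exact: cl.
    have : 0 <= Num.max 0 (e - dist c (g j u)) by rewrite le_max lexx.
    lra.
  have [m m0 Hm] := pos_min F 0 1 Fc Fp.
  exists m => // u u01 eu; have := Hm u u01; rewrite /F.
  have -> : Num.max 0 (e - dist c (g j u)) = 0 by apply/max_idPl; lra.
  lra.
have HmC : forall c', C c' -> e <= dist c c' -> del + m <= dist (yt t) c'.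
  move=> c' /C_rep [j [u [u01 ->]]]; apply: Hm; move/andP: u01 => [? ?].
  by apply/andP; split => //; exact: ltW.
have D0 := dist_ge0 x q.
have D1 : 0 < D + 1 by lra.
exists (m / (2 * (D + 1))); first by apply: divr_gt0 => //; lra.
move=> t' t'01 tt'.
have hy : dist (yt t) (yt t') < m / 2.
  rewrite yt_dist distrC.
  have : `|t - t'| * (D + 1) < m / 2.
    by move: tt'; rewrite ltr_pdivlMr ?mulr_gt0 // => h; lra.
  have : `|t - t'| * D <= `|t - t'| * (D + 1) by apply: ler_wpM2l => //; lra.
  lra.
have [clC' cl'] := phi_cl t'01.
have h1 := cl' c clC.
have h2 := dist_tri (yt t') (yt t) c.
have h3 := dist_tri (yt t) (yt t') (phi t').
rewrite (dist_sym (yt t') (yt t)) in h2.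
rewrite ltNge; apply/negP => /(HmC _ clC') h4.
rewrite -/del in h2.
move: h1 h2 h3 h4 hy; set a1 := dist _ _; set a2 := dist _ _; set a3 := dist _ _; set a4 := dist _ _.
clear; move=> *; lra.
Qed.

Section Arc.
Variables (i0 : 'I_n) (s0 a b : R).
Hypothesis Hs0 : 0 <= s0 < 1.
Hypothesis Hps : g i0 s0 = p.
Definition h u := g i0 (s0 + u).
Hypothesis Ha : 0 < a <= 1.
Hypothesis Hab : forall v, 0 <= v < a -> dist x (h v) < D.
Hypothesis Hb : 0 < b <= 1.
Hypothesis Hbb : forall v, 0 <= v < b -> dist x (h (1 - v)) < D.

Definition W c := exists u, [/\ 0 <= u <= 1, (u < a \/ 1 - b < u) & c = h u].

Lemma h_cont : continuous h.
Proof.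
move=> u; apply: continuous_comp; last exact: g_cont.
exact: (continuousD (f := fun=> s0) (g := id) (cvg_cst _) cvg_id).
Qed.

Lemma h0 : h 0 = p. Proof. by rewrite /h addr0. Qed.
Lemma h1 : h 1 = p. Proof. by rewrite /h (Hcc i0).2.1. Qed.

Lemma W_ball c : W c -> dist x c < D.
Proof.
move=> [u [/andP[u0 u1] [ua|ub] ->]]; first by apply: Hab; rewrite u0.
have -> : u = 1 - (1 - u) by ring.
by apply: Hbb; apply/andP; split; lra.
Qed.

Lemma W_C c : W c -> C c.
Proof. by move=> [u [_ _ ->]]; exists i0, (s0 + u). Qed.

Lemma p_W : W p.
Proof. exists 0; split; [by rewrite lexx ler01 | by left; case/andP: Ha | by rewrite h0]. Qed.

Lemma W_closure c : (forall r, 0 < r -> exists c', W c' /\ dist c c' < r) ->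
  [\/ W c, c = h a | c = h (1 - b)].
Proof.
move=> Hcl.
have [Wc|nW] := pselect (W c); first exact: Or31.
have [Ea|na] := eqVneq c (h a); first exact: Or32.
have [Eb|nb] := eqVneq c (h (1 - b)); first exact: Or33.
exfalso.
move/andP: Ha => [a0 a1]; move/andP: Hb => [b0 b1].
have P1 : forall u, 0 <= u <= a -> 0 < dist c (h u).
  move=> u /andP[u0 ua]; apply: dist_pos => E.
  have [ua'|ua'] := ltP u a.
    by apply: nW; exists u; split => //; [apply/andP; split; lra | left].
  by move/eqP: na; apply; rewrite E (_ : u = a) //; lra.
have P2 : forall u, 1 - b <= u <= 1 -> 0 < dist c (h u).
  move=> u /andP[u0 ua]; apply: dist_pos => E.
  have [ub'|ub'] := ltP (1 - b) u.
    by apply: nW; exists u; split => //; [apply/andP; split; lra | right].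
  by move/eqP: nb; apply; rewrite E (_ : u = 1 - b) //; lra.
have [r1 r10 H1] := pos_min (fun u => dist c (h u)) 0 a (dist_cont c h h_cont) P1.
have [r2 r20 H2] := pos_min (fun u => dist c (h u)) (1 - b) 1 (dist_cont c h h_cont) P2.
have m0 : 0 < Num.min r1 r2 by rewrite lt_min r10 r20.
have [c' [[u [/andP[u0 u1] uab ->]]]] := Hcl (Num.min r1 r2) m0.
rewrite lt_min => /andP[l1 l2].
case: uab => [ua|ub].
  by have := H1 u (introT andP (conj u0 (ltW ua))); lra.
by have := H2 u (introT andP (conj (ltW ub) u1)); lra.
Qed.

Lemma h_rep u : 0 <= u < 1 -> exists v, [/\ 0 <= v <= 1 & g i0 u = h v].
Proof.
move=> /andP[u0 u1]; move/andP: Hs0 => [s00 s01].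
have [su|us] := lerP s0 u.
  by exists (u - s0); split; [apply/andP; split; lra | rewrite /h addrC subrK].
exists (u - s0 + 1); split; first by apply/andP; split; lra.
by rewrite /h (_ : s0 + (u - s0 + 1) = u + 1) ?(Hcc i0).2.1 //; ring.
Qed.

Lemma W_open c : W c -> exists2 r, 0 < r & forall c', C c' -> dist c c' < r -> W c'.
Proof.
move=> [w [/andP[w0 w1] wab ->]].
move/andP: Ha => [a0 a1]; move/andP: Hb => [b0 b1].
have P0 : forall v, a <= v <= 1 - b -> 0 < dist (h w) (h v).
  move=> v /andP[va vb]; apply: dist_pos => E.
  have [wl1|we1] := ltP w 1.
    have := inj_near (Hcc i0) (s0 + w) (s0 + v) E.
    have -> : s0 + w - (s0 + v) = w - v by ring.
    rewrite ltr_norml => H; have {H} E2 : s0 + w = s0 + v by apply: H; lra.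
    by case: wab; lra.
  have w1' : w = 1 by lra.
  move: E; rewrite w1' h1 -h0 => E.
  have := inj_near (Hcc i0) (s0 + 0) (s0 + v) E.
  have -> : s0 + 0 - (s0 + v) = - v by ring.
  rewrite normrN ltr_norml => H; have {H} E2 : s0 + 0 = s0 + v by apply: H; lra.
  lra.
have [r0 r00 H0] := pos_min (fun v => dist (h w) (h v)) a (1 - b) (dist_cont _ h h_cont) P0.
pose Q := fun j r => j != i0 -> forall u, 0 <= u <= 1 -> r <= dist (h w) (g j u).
have Q1 : forall j, exists2 r, 0 < r & Q j r.
    move=> j; have [->|ji] := eqVneq j i0; first by exists 1 => //; rewrite /Q eqxx.
    have Pj : forall u, 0 <= u <= 1 -> 0 < dist (h w) (g j u).
      by move=> u _; apply: dist_pos; apply: Hdis; rewrite eq_sym.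
    have [r r0' Hr] := pos_min (fun u => dist (h w) (g j u)) 0 1 (dist_cont _ _ (g_cont j)) Pj.
    by exists r => // _; exact: Hr.
have Q2 : forall j e e', 0 < e' -> e' <= e -> Q j e -> Q j e'.
  by move=> j e e' e'0 ee H ji u u01; apply: le_trans ee (H ji u u01).
have [r1 r10 H1] := finite_min _ Q Q1 Q2.
have m0 : 0 < Num.min r0 r1 by rewrite lt_min r00 r10.
exists (Num.min r0 r1) => // c' /C_rep [j [u [u01 ->]]].
rewrite lt_min => /andP[l0 l1].
have [ji|ji] := eqVneq j i0; last first.
  by have := H1 j ji u (introT andP (conj (proj1 (andP u01)) (ltW (proj2 (andP u01))))); lra.
move: l0 l1; rewrite ji => l0 l1.
have [v [/andP[v0 v1] E]] := h_rep _ u01; rewrite E in l0 *.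
have [va|va] := ltP v a; first by exists v; split => //; [apply/andP; split | left].
have [vb|vb] := ltP (1 - b) v; first by exists v; split => //; [apply/andP; split | right].
by have := H0 v (introT andP (conj va vb)); lra.
Qed.
End Arc.

Lemma arcA i0 s0 a : 0 <= s0 < 1 -> g i0 s0 = p -> 0 < a < 1 -> g i0 (s0 + a) = q ->
  (forall v, 0 <= v < a -> dist x (g i0 (s0 + v)) < D) ->
  arc_co (g i0) p q `<=` ball_int x D.
Proof.
move=> /andP[s00 s01] ps /andP[a0 a1] qa Hab.
move=> y [s [t [u [/andP[s1 s2] /andP[t1 t2] [gs gt] /andP[su ue] ->]]]].
have gc := Hcc i0.
have ss : s = s0.
  apply: (inj_near gc); first by rewrite gs ps.
  by rewrite ltr_norml; apply/andP; split; lra.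
subst s; rewrite /ball_int /=.
have key : u < s0 + a -> dist x (g i0 u) < D.
  move=> ua; have E : s0 + (u - s0) = u by ring.
  by have := Hab (u - s0); rewrite E; apply; apply/andP; split; lra.
have [e1|e1] := ltP (s0 + a) 1.
  have tt : t = s0 + a.
    apply: (inj_near gc); first by rewrite gt qa.
    by rewrite ltr_norml; apply/andP; split; lra.
  subst t; move: ue; rewrite /arc_end; case: ifP => [_ ue|/negbT]; last by rewrite -ltNge; lra.
  by apply: key; lra.
have tt : t = s0 + a - 1.
  apply: (inj_near gc); first by rewrite gt -qa; have := gc.2.1 (s0 + a - 1); rewrite subrK.
  by rewrite ltr_norml; apply/andP; split; lra.
subst t; move: ue; rewrite /arc_end; case: ifP => [/[swap] _|_ ue]; first by lra.
by apply: key; lra.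
Qed.

Lemma arcB i0 s0 b : 0 <= s0 < 1 -> g i0 s0 = p -> 0 < b < 1 -> g i0 (s0 + (1 - b)) = q ->
  (forall v, 0 <= v < b -> dist x (g i0 (s0 + (1 - v))) < D) ->
  arc_oc (g i0) q p `<=` ball_int x D.
Proof.
move=> /andP[s00 s01] ps /andP[b0 b1] qb Hbb.
move=> y [t [s [u [/andP[t1 t2] /andP[s1 s2] [gt gs] /andP[tu ue] ->]]]].
have gc := Hcc i0.
have ss : s = s0.
  apply: (inj_near gc); first by rewrite gs ps.
  by rewrite ltr_norml; apply/andP; split; lra.
subst s; rewrite /ball_int /=.
have [e1|e1] := ltP (s0 + (1 - b)) 1.
  have tt : t = s0 + (1 - b).
    apply: (inj_near gc); first by rewrite gt qb.
    by rewrite ltr_norml; apply/andP; split; lra.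
  subst t; move: ue; rewrite /arc_end; case: ifP => [/[swap] _|_ ue]; first by lra.
  have := Hbb (s0 + 1 - u); rewrite (_ : s0 + (1 - (s0 + 1 - u)) = u); last by ring.
  by apply; apply/andP; split; lra.
have tt : t = s0 + (1 - b) - 1.
  apply: (inj_near gc); first by rewrite gt -qb; have := gc.2.1 (s0 + (1 - b) - 1); rewrite subrK.
  by rewrite ltr_norml; apply/andP; split; lra.
subst t; move: ue; rewrite /arc_end; case: ifP => [_ ue|/negbT]; last by rewrite -ltNge; lra.
have := Hbb (s0 - u); rewrite (_ : s0 + (1 - (s0 - u)) = u + 1); last by ring.
by rewrite gc.2.1; apply; apply/andP; split; lra.
Qed.

Lemma main_result : exists i : 'I_n,
    [/\ curve_img (g i) p, curve_img (g i) q &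
      (arc_co (g i) p q `<=` ball_int x D \/
       arc_oc (g i) q p `<=` ball_int x D)].
Proof.
have [i0 [s0 [s01 ps]]] := C_rep _ Hp.1.
have gc := Hcc i0.
have [pq|npq] := eqVneq p q.
  exists i0; split; [by exists s0 | by rewrite -pq; exists s0 | left].
  move=> y [s [t [u [s1 t1 [gs gt] /andP[su ue] _]]]].
  have st : s = t by apply: gc.2.2 => //; rewrite gs gt.
  by move: ue; rewrite -st /arc_end lexx; lra.
have pD : dist x p < D.
  have le := Hp.2 q HqC.
  rewrite lt_def le andbT; apply/eqP => E.
  have : closest C x q by split => // y Cy; rewrite E; exact: Hp.2.
  rewrite -yt0 => /phi_uniq; rewrite (lexx 0) ler01 => /(_ isT).
  by rewrite phi0 => qp; move/eqP: npq; apply; rewrite qp.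
have Hps : g i0 s0 = p by rewrite ps.
pose F := fun u => dist x (h i0 s0 u).
have Fc : continuous F := dist_cont x _ (h_cont i0 s0).
have F0 : F 0 < D by rewrite /F (h0 _ _ Hps).
have [a [Ha Hab Ha1]] := first_exit F D Fc F0.
have Fkc : continuous (fun u : R => F (1 - u)).
  move=> u; apply: (continuous_comp (f := fun u : R => 1 - u) (g := F)); last exact: Fc.
  have := (continuousB (f := fun=> (1:R)) (g := id) (x := u) (cvg_cst _) cvg_id); exact.
have Fk0 : F (1 - 0) < D by rewrite subr0 /F (h1 _ _ Hps).
have [b [Hb Hbb Hb1]] := first_exit (fun u : R => F (1 - u)) D Fkc Fk0.
have [[a1 qa]|nqa] := pselect (a < 1 /\ h i0 s0 a = q).
  exists i0; split; [by exists s0 | by exists (s0 + a) | left].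
  have a01 : 0 < a < 1 by rewrite a1 andbT; case/andP: Ha.
  exact: (arcA _ _ _ s01 Hps a01 qa Hab).
have [[b1 qb]|nqb] := pselect (b < 1 /\ h i0 s0 (1 - b) = q).
  exists i0; split; [by exists s0 | by exists (s0 + (1 - b)) | right].
  have b01 : 0 < b < 1 by rewrite b1 andbT; case/andP: Hb.
  exact: (arcB _ _ _ s01 Hps b01 qb Hbb).
exfalso.
pose W' := W i0 s0 a b.
have Wb := W_ball _ _ _ _ Hab Hbb.
suff : W' (phi 1) by rewrite phi1 => /Wb; rewrite ltxx.
apply: (conn01 (fun t => W' (phi t))).
- by rewrite phi0; exact: (p_W _ _ _ _ Hps Ha).
- move=> t t01 Wt.
  have [r r0 Hr] := W_open _ _ _ _ s01 Hps Ha Hb _ Wt.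
  have [eta eta0 He] := phi_cont _ t01 _ r0.
  exists eta => // t' t'01 tt'.
  by apply: Hr; [exact: phi_C | exact: He].
- move=> t /andP[t0 t1] Hbel.
  have t01 : 0 <= t <= 1 by rewrite (ltW t0) t1.
  have Hcl : forall r, 0 < r -> exists c', W' c' /\ dist (phi t) c' < r.
    move=> r r0.
    have [eta eta0 He] := phi_cont _ t01 _ r0.
    have [tl|tl] := lerP 0 (t - eta / 2).
      exists (phi (t - eta / 2)); split.
        by apply: Hbel; rewrite tl /=; lra.
      by apply: He; [apply/andP; split; lra | rewrite ger0_norm; lra].
    exists (phi 0); split; first by apply: Hbel; rewrite lexx.
    by apply: He; [rewrite lexx ler01 | rewrite subr0 ger0_norm; lra].
  case: (W_closure _ _ _ _ Ha Hb (phi t) Hcl) => [//| |].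
  + move=> E.
    have [a1|a1] := ltP a 1.
      have := Ha1 a1; rewrite /F -E => le.
      have [Eq|nEq] := eqVneq (phi t) q.
        by exfalso; apply: nqa; split => //; rewrite -E.
      by have := phi_ball _ t01 (elimN eqP nEq) ; lra.
    have aa : a = 1 by move/andP: Ha => [_ ?]; lra.
    by rewrite E aa (h1 _ _ Hps); exact: (p_W _ _ _ _ Hps Ha).
  + move=> E.
    have [b1|b1] := ltP b 1.
      have := Hb1 b1; rewrite /F -E => le.
      have [Eq|nEq] := eqVneq (phi t) q.
        by exfalso; apply: nqb; split => //; rewrite -E.
      by have := phi_ball _ t01 (elimN eqP nEq) ; lra.
    have bb : b = 1 by move/andP: Hb => [_ ?]; lra.
    by rewrite E bb subrr (h0 _ _ Hps); exact: (p_W _ _ _ _ Hps Ha).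
Qed.
End Main.

Theorem lemma3p3 (R : realType) (d n : nat) (g : 'I_n -> R -> 'rV[R]_d)
    (x q p : 'rV[R]_d) :
  (2 <= d)%N ->
  (forall i, closed_curve (g i)) ->
  (forall i j, i != j -> forall s t, g i s <> g j t) ->
  curves_union g q ->
  (forall y, cseg x q y -> ~ medial_axis (curves_union g) y) ->
  closest (curves_union g) x p ->
  exists i : 'I_n,
    [/\ curve_img (g i) p, curve_img (g i) q &
      (arc_co (g i) p q `<=` ball_int x (euclid_dist x q) \/
       arc_oc (g i) q p `<=` ball_int x (euclid_dist x q))].
Proof.
move=> _ Hcc Hdis HqC Hseg Hp.
exact: (@main_result _ _ _ _ _ _ _ Hcc Hdis HqC Hseg Hp).
Qed.
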